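(* Let $r\ge 1$, $N\ge 1$ and $n\ge 1$ be integers, and for an integer $e\ge 0$ let $$M_r(e)=\sum_{\substack{i_1+\cdots+i_r=e\\ i_1,\dots,i_r\ge 0}}\frac{(N!)^r}{(N+i_1)!\cdots(N+i_r)!}.$$ Then $$B_{N,n}^{(r)}=(-1)^n\,n!\,\det\big(c_{ij}\big)_{1\le i,j\le n},$$ where $c_{ij}=M_r(i-j+1)$ if $j\le i$, $c_{ij}=1$ if $j=i+1$, and $c_{ij}=0$ if $j>i+1$.
   Context: For positive integers $N$ and $r$, the higher order hypergeometric Bernoulli numbers $B^{(r)}_{N,n}$ ($n\ge0$) are defined by $$\left(\frac{x^N/N!}{e^x-\sum_{n=0}^{N-1}x^n/n!}\right)^r=\sum_{n=0}^\infty B_{N,n}^{(r)}\frac{x^n}{n!}.$$ *)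

(* Defs.v *)
From mathcomp Require Import all_boot all_order all_algebra.
Set Implicit Arguments. Unset Strict Implicit. Unset Printing Implicit Defensive.
Import Order.TTheory GRing.Theory Num.Theory.
Local Open Scope ring_scope.

Definition fps := nat -> rat.

Definition fps_mul (a b : fps) : fps :=
  fun n => \sum_(k < n.+1) a k * b (n - k)%N.

Definition fps_one : fps := fun n => if n == 0%N then 1 else 0.

Definition fps_pow (a : fps) (r : nat) : fps := iter r (fps_mul a) fps_one.

Definition exp_tail (N : nat) : fps :=
  fun k => if (N <= k)%N then (k`!%:R)^-1 else 0.

Definition xN_fact (N : nat) : fps :=
  fun k => if k == N then (N`!%:R)^-1 else 0.

Definition egf (b : nat -> rat) : fps := fun n => b n / n`!%:R.

(* b is the sequence of higher order hypergeometric Bernoulli numbers B_{N,n}^{(r)}: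
   (sum_n b_n x^n/n!) = ((x^N/N!)/(e^x - sum_{n<N} x^n/n!))^r, i.e.
   (sum_n b_n x^n/n!) * (e^x - sum_{n<N} x^n/n!)^r = (x^N/N!)^r as formal power series. *)
Definition is_hyp_bernoulli (N r : nat) (b : nat -> rat) : Prop :=
  forall m, fps_mul (egf b) (fps_pow (exp_tail N) r) m = fps_pow (xN_fact N) r m.

Definition Mr (r N e : nat) : rat :=
  \sum_(i : {ffun 'I_r -> 'I_e.+1} | (\sum_(j < r) (i j : nat) == e)%N)
     ((N`!%:R) ^+ r / \prod_(j < r) ((N + i j)`!)%:R).

(* The n x n matrix (c_ij), with 0-based indices (i,j here = i-1,j-1 in the paper). *)
Definition cmat (r N n : nat) : 'M[rat]_n :=
  \matrix_(i < n, j < n)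
    if (j <= i)%N then Mr r N (i - j).+1
    else if (j : nat) == i.+1 then 1 else 0.

(* Main.v *)
Require Import Defs.
From mathcomp Require Import all_boot all_order all_algebra.
From mathcomp Require Import zify.
Import GRing.Theory Num.Theory.
Local Open Scope ring_scope.

Lemma fps_pow_S (a : fps) r m : fps_pow a r.+1 m = fps_mul a (fps_pow a r) m.
Proof. by []. Qed.

Lemma fps_pow_poly (g : fps) r K m : (m < K)%N ->
  fps_pow g r m = ((\poly_(i < K) g i) ^+ r)`_m.
Proof.
elim: r m => [|r IH] m hm.
  by rewrite expr0 coef1 /fps_pow /= /fps_one; case: eqP.
rewrite fps_pow_S /fps_mul exprS coefM; apply: eq_bigr => k _.
rewrite coef_poly (leq_ltn_trans (leq_ord k) hm) -IH //.
exact: leq_ltn_trans (leq_subr k m) hm.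
Qed.

Lemma poly_pow_ffun (g : fps) r K e : ((\poly_(i < K) g i) ^+ r)`_e =
  \sum_(f : {ffun 'I_r -> 'I_K} | (\sum_(j < r) (f j : nat) == e)%N)
     \prod_(j < r) g (f j).
Proof.
rewrite poly_def.
have -> : (\sum_(i < K) g i *: 'X^i) ^+ r = \prod_(j < r) \sum_(i < K) g i *: 'X^i.
  by rewrite prodr_const card_ord.
rewrite bigA_distr_bigA /= coef_sum [RHS]big_mkcond /=; apply: eq_bigr => f _.
rewrite scaler_prod prodrXr coefZ coefXn eq_sym.
by case: eqP; rewrite ?mulr1 ?mulr0.
Qed.

Lemma shift_pow (E h : fps) N r m : (1 <= r)%N ->
  (forall i, E i = if (N <= i)%N then h (i - N)%N else 0) ->
  fps_pow E r m = if (N * r <= m)%N then fps_pow h r (m - N * r)%N else 0.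
Proof.
move=> hr hE; rewrite (@fps_pow_poly _ _ _ _ (ltnSn m)).
have -> : \poly_(i < m.+1) E i = 'X^N * \poly_(i < m.+1 - N) h i.
  apply/polyP => i; rewrite coefXnM !coef_poly hE.
  case: (ltnP i N) => hiN.
    by case: ifP.
  case: (ltnP i m.+1) => him.
    by have -> : (i - N < m.+1 - N)%N by lia.
  by have -> : (i - N < m.+1 - N)%N = false by apply/negbTE; lia.

rewrite exprMn -exprM coefXnM; case: (ltnP m (N * r)) => h1 //.
have hNr : (N <= N * r)%N by rewrite leq_pmulr.
rewrite (@fps_pow_poly h r (m.+1 - N)%N) //; lia.
Qed.

Lemma pow_delta (c : rat) r e :
  fps_pow (fun i => if i == 0%N then c else 0) r e = if e == 0%N then c ^+ r else 0.
Proof.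
elim: r e => [|r IH] e; first by rewrite /fps_pow /= /fps_one expr0.
rewrite fps_pow_S /fps_mul big_ord_recl /= subn0 IH big1 ?addr0.
  by case: eqP => _; [rewrite exprS | rewrite mulr0].
by move=> i _; rewrite /= mul0r.
Qed.

Lemma pow_at0 (h : fps) r : fps_pow h r 0 = h 0%N ^+ r.
Proof.
elim: r => [|r IH]; first by rewrite /fps_pow /= /fps_one expr0.
by rewrite fps_pow_S /fps_mul big_ord1 /= IH exprS.
Qed.

Definition hfN (N : nat) : fps := fun i => (((N + i)`!)%:R)^-1.

Lemma Mr_pow r N e : Mr r N e = (N`!%:R) ^+ r * fps_pow (hfN N) r e.
Proof.
rewrite (@fps_pow_poly _ _ _ _ (ltnSn e)) poly_pow_ffun mulr_sumr /Mr.
by apply: eq_bigr => f _; rewrite /hfN prodfV.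
Qed.

Lemma E_shape N i : exp_tail N i = if (N <= i)%N then hfN N (i - N)%N else 0.
Proof. by rewrite /exp_tail /hfN; case: ifP => // h; rewrite subnKC. Qed.

Lemma X_shape N i : xN_fact N i =
  if (N <= i)%N then (fun k => if k == 0%N then ((N`!)%:R)^-1 else 0 : rat) (i - N)%N else 0.
Proof.
rewrite /xN_fact; case: (leqP N i) => h /=.
  by rewrite subn_eq0; have := eqn_leq i N; rewrite h andbT => ->.
by rewrite (ltn_eqF h).
Qed.
Definition step (f : nat -> rat) (s : seq rat) : seq rat :=
  rcons s (- \sum_(k < size s) s`_k * f (size s - k)%N).
Definition Lseq f e := iter e (step f) [:: 1].
Definition ainv f e := (Lseq f e)`_e.

Lemma size_Lseq f e : size (Lseq f e) = e.+1.
Proof. by elim: e => //= e IH; rewrite /step size_rcons IH. Qed.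

Lemma nth_Lseq f e k : (k <= e)%N -> (Lseq f e)`_k = ainv f k.
Proof.
elim: e => [|e IH] hk; first by move: hk; rewrite leqn0 => /eqP ->.
move: hk; rewrite leq_eqVlt => /orP [/eqP -> //| hk].
by rewrite /= /step nth_rcons size_Lseq hk IH.
Qed.

Lemma ainv_S f e : ainv f e.+1 = - \sum_(k < e.+1) ainv f k * f (e.+1 - k)%N.
Proof.
rewrite {1}/ainv /= /step nth_rcons size_Lseq ltnn eqxx.
by congr (- _); apply: eq_bigr => k _; rewrite nth_Lseq // -ltnS.
Qed.

Lemma ainv_conv f : f 0%N = 1 ->
  forall e, \sum_(k < e.+1) ainv f k * f (e - k)%N = (e == 0%N)%:R.
Proof.
move=> f0 [|e]; first by rewrite big_ord1 /= f0 mulr1.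
rewrite big_ord_recr /= subnn f0 mulr1 ainv_S.
by rewrite addrN.
Qed.

Lemma hess_det (f a : nat -> rat) n : f 0%N = 1 ->
  (forall e, \sum_(k < e.+1) a k * f (e - k)%N = (e == 0%N)%:R) ->
  a n = (-1) ^+ n * \det (\matrix_(i < n, j < n)
    if (j <= i)%N then f (i - j).+1 else if (j : nat) == i.+1 then 1 else 0).
Proof.
move=> f0 conv.
pose T : 'M[rat]_n.+1 := \matrix_(i, j) if (j <= i)%N then f (i - j)%N else 0.
pose A : 'M[rat]_n.+1 := \matrix_(i, j) if (j <= i)%N then a (i - j)%N else 0.
have TA : T *m A = 1.
  apply/matrixP => i j; rewrite !mxE.
  under eq_bigr => k _ do rewrite !mxE.
  case: (leqP j i) => hji; last first.
    rewrite big1; last by move=> k _; case: leqP => h1; case: leqP => h2 //;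
      rewrite ?mulr0 ?mul0r //; lia.
    by case: eqP => [e|_] //; move: hji; rewrite e ltnn.
  rewrite -(big_mkord xpredT (fun k => (if (k <= i)%N then f (i - k)%N else 0) *
    (if (j <= k)%N then a (k - j)%N else 0))).
  rewrite (@big_cat_nat _ _ _ j) //=; last by apply: ltnW.
  rewrite big_nat_cond big1 ?add0r; last first.
    by move=> k /andP [/andP [_ hk] _]; rewrite [(j <= k)%N]leqNgt hk mulr0.
  have hj1 : (j <= i.+1)%N by lia.
  rewrite (@big_cat_nat _ _ _ i.+1) //=.
  rewrite [X in _ + X]big_nat_cond [X in _ + X]big1 ?addr0; last first.
    by move=> k /andP [/andP [hk _] _]; rewrite [(k <= i)%N]leqNgt hk mul0r.
  rewrite -{1}(add0n j) big_addn big_mkord.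
  have -> : (i.+1 - j = (i - j).+1)%N by lia.
  rewrite -[RHS](_ : ((i - j)%N == 0%N)%:R = _); first last.
    by rewrite -val_eqE /= subn_eq0 eqn_leq hji andbT.
  rewrite -conv; apply: eq_bigr => k _.
  have hk := ltn_ord k.
  have -> : (k + j <= i)%N by lia.
  rewrite leq_addl addnK mulrC; congr (_ * f _); lia.
have dT : \det T = 1.
  rewrite det_trig; last first.
    by apply/is_trig_mxP => i j hij; rewrite mxE leqNgt hij.
  by rewrite big1 // => i _; rewrite mxE leqnn subnn f0.
have AT : A = \adj T.
  have := congr1 (mulmx (\adj T)) TA.
  by rewrite mulmxA mul_adj_mx dT mul1mx => ->; rewrite mulmx1.
have -> : a n = A ord_max ord0 by rewrite mxE /= subn0.
rewrite AT mxE /cofactor /= add0n; congr (_ * \det _).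
apply/matrixP => i j; rewrite !mxE lift0 lift_max /=.
case: (leqP j i) => hji; first by rewrite leqW // subSn.
case: eqP => [->|hne]; first by rewrite leqnn subnn.
by have -> : (j <= i.+1)%N = false by apply/negbTE; lia.

Qed.

Theorem theorem2 (r N n : nat) (hr : (1 <= r)%N) (hN : (1 <= N)%N) (hn : (1 <= n)%N) :
  (exists b : nat -> rat, is_hyp_bernoulli N r b) /\
  (forall b : nat -> rat, is_hyp_bernoulli N r b ->
     b n = (-1) ^+ n * (n`!)%:R * \det (cmat r N n)).
Proof.
pose H := fps_pow (hfN N) r.
pose c : rat := ((N`!)%:R)^-1.
pose K : rat := ((N`!)%:R) ^+ r.
have Kc : K * c ^+ r = 1.
  by rewrite /K /c -exprMn divff ?expr1n // pnatr_eq0 -lt0n fact_gt0.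
have FF m : fps_pow (exp_tail N) r m =
    if (N * r <= m)%N then H (m - N * r)%N else 0.
  by apply: shift_pow => // i; apply: E_shape.
have GG m : fps_pow (xN_fact N) r m =
    if (N * r <= m)%N then (if (m - N * r)%N == 0%N then c ^+ r else 0) else 0.
  by rewrite (@shift_pow _ _ _ _ _ hr (X_shape N)) pow_delta.
have H0 : H 0%N = c ^+ r by rewrite /H pow_at0 /hfN addn0.
have fM e : Mr r N e = K * H e by rewrite Mr_pow.
have f0 : Mr r N 0 = 1 by rewrite fM H0.
have key (a : nat -> rat) e :
    \sum_(k < (N * r + e).+1) a k * fps_pow (exp_tail N) r (N * r + e - k)%N
    = \sum_(k < e.+1) a k * H (e - k)%N.
  rewrite (bigID (fun k : 'I_ _ => (k < e.+1)%N)) /=.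
  rewrite [X in _ + X]big1 ?addr0; last first.
    move=> k; rewrite -leqNgt => hk; rewrite FF.
    have hNr : (0 < N * r)%N by rewrite muln_gt0 hN hr.
    have := ltn_ord k => hk2.
    have -> : (N * r <= N * r + e - k)%N = false by apply/negbTE; lia.
    by rewrite mulr0.
  rewrite [RHS](big_ord_widen (N * r + e).+1 (fun k => a k * H (e - k)%N)); last lia.
  apply: eq_bigr => k hke; rewrite FF.
  have -> : (N * r <= N * r + e - k)%N by lia.
  congr (_ * H _); lia.
have low (a : nat -> rat) m : (m < N * r)%N ->
    \sum_(k < m.+1) a k * fps_pow (exp_tail N) r (m - k)%N = 0.
  move=> hm; apply: big1 => k _; rewrite FF.
  have -> : (N * r <= m - k)%N = false by apply/negbTE; lia.
    by rewrite mulr0.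

have egfK (b : nat -> rat) k : egf b k * (k`!)%:R = b k.
  by rewrite /egf mulfVK // pnatr_eq0 -lt0n fact_gt0.
split.
  pose a := ainv (Mr r N).
  exists (fun k => a k * (k`!)%:R) => m; rewrite /fps_mul.
  have ea k : egf (fun k => a k * (k`!)%:R) k = a k.
    by rewrite /egf mulfK // pnatr_eq0 -lt0n fact_gt0.
  under eq_bigr => k _ do rewrite ea.
  case: (ltnP m (N * r)) => hm.
    by rewrite low // GG leqNgt hm.
  have -> : m = (N * r + (m - N * r))%N by lia.
  rewrite key GG leq_addr addKn.
  have := @ainv_conv _ f0 (m - N * r); under eq_bigr => k _ do rewrite fM mulrCA.
  rewrite -mulr_sumr => hS.
  have -> : \sum_(i < (m - N * r).+1) a i * H (m - N * r - i)%N =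
            c ^+ r * (K * \sum_(i < (m - N * r).+1) a i * H (m - N * r - i)%N).
    by rewrite mulrA (mulrC _ K) Kc mul1r.
  by rewrite hS; case: eqP; rewrite ?mulr1 ?mulr0.
move=> b hb.
have conv : forall e, \sum_(k < e.+1) egf b k * Mr r N (e - k)%N = (e == 0%N)%:R.
  move=> e; have := hb (N * r + e); rewrite /fps_mul key GG leq_addr addKn => hS.
  under eq_bigr => k _ do rewrite fM mulrCA.
  rewrite -mulr_sumr hS; case: eqP => _; by rewrite ?mulr0 ?Kc.
rewrite -egfK (@hess_det _ _ n f0 conv) /cmat.
by rewrite -!mulrA [_ * n`!%:R]mulrC.
Qed.
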